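(* For every integer $n\ge 0$, $$\int_0^1 Q_n(u;0,1)\,du=2^n B_n\!\left(\tfrac12\right),$$ where $Q_n(u;0,1)=\sum_{k=1}^{n+1}M_{n+1,k}\,u^{n+1-k}(u-1)^{k-1}$.
   Context: The MacMahon numbers $M_{n,k}$ ($n\ge1$, $1\le k\le n$) are defined by $M_{n,1}=1$ for all $n\ge1$ and, for $n\ge 2$, $2\le k\le n$, $M_{n,k}=(2k-1)M_{n-1,k}+(2n-2k+1)M_{n-1,k-1}$, with the convention $M_{n-1,n}=0$. For $a,b\in\mathbb{C}$ the derivative polynomial is $Q_n(u;a,b)=\sum_{k=1}^{n+1}M_{n+1,k}(u-a)^{n+1-k}(u-b)^{k-1}$. The Bernoulli polynomials $B_n(w)$ are defined by $\sum_{n\ge0}B_n(w)\frac{t^n}{n!}=\frac{t e^{wt}}{e^t-1}$. *)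

(* Defs.v *)
From HB Require Import structures.
From mathcomp Require Import all_boot all_order all_algebra.
Set Implicit Arguments. Unset Strict Implicit. Unset Printing Implicit Defensive.
Import Order.TTheory GRing.Theory Num.Theory.
Local Open Scope ring_scope.

(* MacMahon numbers M_{n,k} (n >= 1, 1 <= k <= n); value 0 outside that range,
   which implements the convention M_{n-1,n} = 0. *)
Fixpoint macmahon (n k : nat) : nat :=
  match n with
  | 0 => 0%N
  | n'.+1 =>
      if k == 1%N then 1%N
      else if (k == 0%N) || (n < k)%N then 0%N
      else ((2 * k - 1) * macmahon n' k + (2 * n - 2 * k + 1) * macmahon n' k.-1)%N
  end.

Definition Qpoly (n : nat) (a b : rat) : {poly rat} :=
  \sum_(1 <= k < n.+2)
     (macmahon n.+1 k)%:R *: (('X - a%:P) ^+ (n.+1 - k) * ('X - b%:P) ^+ (k - 1)).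

Definition poly_int01 (p : {poly rat}) : rat :=
  \sum_(i < size p) p`_i / (i.+1)%:R.

(* Bernoulli polynomial values B_n(w), from the generating function
   t e^{wt}/(e^t-1) = sum B_n(w) t^n/n!, i.e. (e^t - 1) * sum B_n(w) t^n/n! = t e^{wt};
   comparing coefficients of t^{n+1} gives
   sum_{k=0}^{n} C(n+1,k) B_k(w) = (n+1) w^n, which determines B_n(w) recursively. *)
Fixpoint bernoulli_upto (w : rat) (n : nat) : seq rat :=
  match n with
  | 0 => [:: 1]
  | n'.+1 =>
      let s := bernoulli_upto w n' in
      rcons s (w ^+ n - ((n.+1)%:R)^-1 * \sum_(k < n) ('C(n.+1, k))%:R * s`_k)
  end.

Definition bernoulli_poly_at (n : nat) (w : rat) : rat := (bernoulli_upto w n)`_n.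

(* Main.v *)
Require Import Defs.
From HB Require Import structures.
From mathcomp Require Import all_boot all_order all_algebra.
From mathcomp Require Import ring zify lra.
Import Order.TTheory GRing.Theory Num.Theory.
Local Open Scope ring_scope.

Lemma int01_E (p : {poly rat}) N : (size p <= N)%N ->
  poly_int01 p = \sum_(i < N) p`_i / (i.+1)%:R.
Proof.
move=> hN; rewrite /poly_int01 -!(big_mkord xpredT (fun i => p`_i / (i.+1)%:R)).
rewrite (big_cat_nat (leq0n _) hN) /= [X in _ = _ + X]big1_seq ?addr0 //.
move=> i /andP[_]; rewrite mem_index_iota => /andP[hi _]; rewrite nth_default ?mul0r //.
Qed.

Lemma int01D (p q : {poly rat}) : poly_int01 (p + q) = poly_int01 p + poly_int01 q.
Proof.
rewrite !(@int01_E _ (maxn (size p) (size q))) ?leq_maxl ?leq_maxr ?size_polyD //.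
by rewrite -big_split /=; apply: eq_bigr => i _; rewrite coefD mulrDl.
Qed.

Lemma int01_0 : poly_int01 0 = 0.
Proof. by rewrite /poly_int01 size_poly0 big_ord0. Qed.

Lemma int01CM (a : rat) (p : {poly rat}) : poly_int01 (a%:P * p) = a * poly_int01 p.
Proof.
rewrite !(@int01_E _ (size p)) //; last by rewrite mul_polyC size_scale_leq.
by rewrite big_distrr; apply: eq_bigr => i _; rewrite coefCM /= mulrA.
Qed.

Lemma int01N (p : {poly rat}) : poly_int01 (- p) = - poly_int01 p.
Proof. by rewrite -mulN1r -polyCN int01CM mulN1r. Qed.

Lemma int01B (p q : {poly rat}) : poly_int01 (p - q) = poly_int01 p - poly_int01 q.
Proof. by rewrite int01D int01N. Qed.

Lemma int01_sum (I : Type) (r : seq I) (P : pred I) (F : I -> {poly rat}) :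
  poly_int01 (\sum_(i <- r | P i) F i) = \sum_(i <- r | P i) poly_int01 (F i).
Proof. exact: (big_morph poly_int01 int01D int01_0). Qed.

Lemma int01_natM (m : nat) (p : {poly rat}) : poly_int01 (m%:R * p) = m%:R * poly_int01 p.
Proof. by rewrite -polyC_natr int01CM. Qed.

Lemma int01_deriv (p : {poly rat}) : poly_int01 p^`() = p.[1] - p.[0].
Proof.
have hs : (size p^`() <= size p)%N.
  case: (eqVneq p 0) => [->|pn0]; first by rewrite deriv0.
  exact: ltnW (lt_size_deriv pn0).
rewrite (@int01_E _ _ hs) horner_coef0 horner_coef.
have -> : \sum_(i < size p) p`_i * 1 ^+ i = \sum_(i < (size p).+1) p`_i.
  rewrite big_ord_recr /= nth_default // addr0.
  by apply: eq_bigr => i _; rewrite expr1n mulr1.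
rewrite big_ord_recl /= addrC addKr; apply: eq_bigr => i _.
rewrite coef_deriv /bump /= add1n -mulr_natr; field.
by rewrite addrC natr1 pnatr_eq0.
Qed.
Lemma mac0 m : macmahon m 0 = 0%N.
Proof. by case: m. Qed.

Lemma mac_big m k : (m < k)%N -> macmahon m k = 0%N.
Proof.
case: m => [//|m] /= h.
have -> : (k == 1%N) = false by apply/eqP; lia.
by rewrite h orbT.
Qed.

Lemma mac_rec n k : (k <= n.+2)%N ->
  macmahon n.+2 k = ((2*k-1) * macmahon n.+1 k + (2*n.+2 - 2*k + 1) * macmahon n.+1 k.-1)%N.
Proof.
move=> hk; case: k hk => [|[|k]] hk.
- by rewrite [LHS]/= mac0 !muln0.
- by rewrite [LHS]/= (mac0 n.+1) muln0 addn0 muln1; case: n {hk}.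
- rewrite [LHS]/=. have -> : (n.+2 < k.+2)%N = false by lia. by [].
Qed.

Lemma mac11 : macmahon 1 1 = 1%N. Proof. by []. Qed.

Arguments macmahon : simpl never.

Notation xx := ('X - (0:rat)%:P).
Notation yy := ('X - (1:rat)%:P).
Definition T (a b : nat) : {poly rat} := xx ^+ a * yy ^+ b.
Definition D (p : {poly rat}) : {poly rat} := (xx + yy) * p + (xx * yy) * p^`() *+ 2.

Lemma Tkey a b : D (T a b) = T a b.+1 *+ (2*a+1) + T a.+1 b *+ (2*b+1).
Proof.
rewrite /D /T derivM !deriv_exp !derivXsubC !mul1r.
case: a => [|a]; case: b => [|b] /=; rewrite ?mulr0n ?expr0 ?exprS; ring.
Qed.

Lemma DD p q : D (p + q) = D p + D q.
Proof. rewrite /D derivD; ring. Qed.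
Lemma D0 : D 0 = 0.
Proof. rewrite /D deriv0; ring. Qed.
Lemma DMn p m : D (p *+ m) = D p *+ m.
Proof. rewrite /D derivMn; ring. Qed.

Lemma Qsum n : Qpoly n 0 1 = \sum_(k < n.+2) T (n.+1 - k) (k - 1) *+ macmahon n.+1 k.
Proof.
rewrite /Qpoly -(big_mkord xpredT (fun k => T (n.+1 - k) (k-1) *+ macmahon n.+1 k)) (big_ltn (ltn0Sn _)) mac0 mulr0n add0r.
by apply: eq_bigr => k _; rewrite scaler_nat.
Qed.

Lemma Qrec n : Qpoly n.+1 0 1 = D (Qpoly n 0 1).
Proof.
rewrite [Qpoly n 0 1]Qsum (big_morph D DD D0).
under eq_bigr do rewrite DMn.
pose S1 := \sum_(k < n.+2) T (n.+1 - k) k *+ (macmahon n.+1 k * (2*(n.+1-k)+1)).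
pose S2 := \sum_(k < n.+2) T (n.+2 - k) (k - 1) *+ (macmahon n.+1 k * (2*k-1)).
transitivity (S1 + S2).
  rewrite Qsum.
  under eq_bigr => k _.
    rewrite (@mac_rec n k (ltn_ord k)) mulrnDr. over.
  rewrite big_split /= addrC; congr (_ + _).
  - rewrite big_ord_recl mac0 muln0 mulr0n add0r /S1; apply: eq_bigr => i _.
    rewrite lift0 mulnC /=; congr (T _ _ *+ (_ * _)); lia.
  - rewrite big_ord_recr /= mac_big // muln0 mulr0n addr0 /S2; apply: eq_bigr => i _.
    by rewrite mulnC.
rewrite -big_split /=; apply: eq_bigr => k _.
case: k => [[|k] hk] /=; first by rewrite mac0 !mul0n !mulr0n addr0.
rewrite Tkey mulrnDl -!mulrnA; congr (T _ _ *+ _ + T _ _ *+ _); lia.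
Qed.
Lemma leib (R : nzRingType) (a b : nat -> R) n :
  \sum_(k < n.+2) a k * b (n.+1 - k)%N *+ 'C(n.+1, k) =
  \sum_(k < n.+1) (a k.+1 * b (n - k)%N + a k * b (n.+1 - k)%N) *+ 'C(n, k).
Proof.
rewrite big_ord_recl /= bin0 mulr1n subn0.
under eq_bigr => i _ do rewrite /bump /= add1n binS mulrnDr subSS.
rewrite big_split /=.
under [RHS]eq_bigr do rewrite mulrnDl.
rewrite [RHS]big_split /= addrA [RHS]addrC; congr (_ + _).
rewrite [RHS]big_ord_recl /= bin0 mulr1n subn0; congr (_ + _).
rewrite big_ord_recr /= bin_small // mulr0n addr0.
by apply: eq_bigr => i _; rewrite /bump /= add1n subSS.
Qed.

Definition cc : {poly rat} := xx + yy.
Definition e (j : nat) : {poly rat} := (1 + (-1) ^+ j) - (1 - (-1) ^+ j) * cc.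

Lemma e_deriv j : (e j)^`() = - ((1 - (-1) ^+ j) *+ 2).
Proof.
have h1 : ((-1) ^+ j : {poly rat})^`() = 0.
  by rewrite deriv_exp derivN -polyC1 derivC oppr0 mul0r mul0rn.
rewrite /e /cc derivB derivD derivM derivB derivD !derivXsubC h1 -polyC1 derivC.
rewrite polyC1; ring.
Qed.

Lemma term_id (Q : {poly rat}) j :
  (cc * Q + (xx * yy) * Q^`() *+ 2) * e j + Q * e j.+1 = (xx * yy) * (Q * e j)^`() *+ 2.
Proof.
rewrite derivM e_deriv /e /cc exprS; ring.
Qed.

Lemma Q0 : Qpoly 0 0 1 = 1.
Proof. by rewrite /Qpoly big_nat1 mac11 scale1r !expr0 mulr1. Qed.

Lemma Fid n : \sum_(k < n.+1) (Qpoly k 0 1 * e (n - k)) *+ 'C(n, k) = (n == 0%N)%:R *+ 2.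
Proof.
elim: n => [|n IH].
  by rewrite big_ord1 Q0 /e /= mul1r expr0 subrr mul0r subr0 mulr1n mulr2n.
rewrite (@leib _ (fun k => Qpoly k 0 1) e n).
transitivity ((xx * yy) * (\sum_(k < n.+1) (Qpoly k 0 1 * e (n - k)) *+ 'C(n, k))^`() *+ 2).
  rewrite raddf_sum mulr_sumr -sumrMnl; apply: eq_bigr => k _.
  rewrite Qrec /D -/cc subSn -1?ltnS // term_id raddfMn mulrnAr -!mulrnA; congr (_ *+ _).
  by rewrite mulnC.
by rewrite IH derivMn -polyC_natr derivC mul0rn mulr0 mul0rn.
Qed.
Section BinS.
Local Open Scope nat_scope.
Lemma binC2 m k i : ('C(m, i + k) * 'C(i + k, k) = 'C(m, k) * 'C(m - k, i))%N.
Proof.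
case: (leqP (i + k) m) => h; last first.
  rewrite bin_small // mul0n. case: (leqP k m) => hk; last by rewrite bin_small.
  by rewrite (@bin_small (m - k)) ?muln0 //; lia.
apply/eqP; rewrite -(eqn_pmul2r (_ : 0 < k`! * i`! * (m - (i+k))`!)) ?muln_gt0 ?fact_gt0 //.
have e1 := bin_fact h.
have e2 := bin_fact (leq_addl i k).
have e3 : k <= m by lia.
have e4 := bin_fact e3.
have e5 : i <= m - k by lia.
have e6 := bin_fact e5.
rewrite addnK in e2. have ee : m - k - i = m - (i + k) by lia.
rewrite ee in e6.
apply/eqP.
transitivity ('C(m, i + k) * ('C(i + k, k) * (k`! * i`!)) * (m - (i + k))`!); first by rewrite !mulnA.
rewrite e2 -mulnA e1.
transitivity ('C(m, k) * (k`! * ('C(m - k, i) * (i`! * (m - (i + k))`!)))); last first.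
  lia.
by rewrite e6 e4.
Qed.
End BinS.


Lemma exch (f g : nat -> rat) m :
 \sum_(j < m.+1) (\sum_(k < j.+1) (f k * g (j - k)%N) *+ 'C(j, k)) *+ 'C(m, j)
 = \sum_(k < m.+1) (f k * \sum_(i < (m - k).+1) g i *+ 'C(m - k, i)) *+ 'C(m, k).
Proof.
transitivity (\sum_(j < m.+1) \sum_(k < m.+1) (f k * g (j - k)%N) *+ ('C(j, k) * 'C(m, j))).
  apply: eq_bigr => j _; rewrite -sumrMnl.
  rewrite (big_ord_widen m.+1 (fun k => (f k * g (j - k)%N) *+ 'C(j, k) *+ 'C(m, j)) (ltn_ord j)).
  rewrite big_mkcond; apply: eq_bigr => k _; case: ifP => hk; first by rewrite mulrnA.
  by rewrite bin_small ?mul0n ?mulr0n // ltnNge -ltnS hk.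
rewrite exchange_big; apply: eq_bigr => k _.
rewrite mulr_sumr -sumrMnl.
have hk : (k <= m)%N by rewrite -ltnS.
rewrite -(big_mkord xpredT (fun j => (f k * g (j - k)%N) *+ ('C(j, k) * 'C(m, j)))).
rewrite -(big_mkord xpredT (fun i => f k * (g i *+ 'C(m - k, i)) *+ 'C(m, k))).
rewrite (@big_cat_nat _ _ _ k 0 m.+1) //; last by rewrite ltnW.
rewrite big1_seq ?add0r; last first.
  move=> j /andP[_]; rewrite mem_index_iota => /andP[_ hj].
  by rewrite bin_small ?mul0n ?mulr0n.
rewrite Monoid.mul1m -{1}(add0n k) big_addn subSn //; apply: eq_bigr => i _.
by rewrite addnK mulnC binC2 mulrnAr -mulrnA mulnC.
Qed.

Lemma int01_Mn (p : {poly rat}) m : poly_int01 (p *+ m) = poly_int01 p *+ m.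
Proof. elim: m => [|m IH]; first by rewrite !mulr0n int01_0. by rewrite !mulrS int01D IH. Qed.

Lemma int01_1 : poly_int01 1 = 1.
Proof. by rewrite /poly_int01 size_poly1 big_ord1 coef1 /= divr1. Qed.

Lemma int01_C (c : rat) : poly_int01 c%:P = c.
Proof. by rewrite -[c%:P]mulr1 int01CM int01_1 mulr1. Qed.

Definition I k := poly_int01 (Qpoly k 0 1).
Definition L k := poly_int01 (Qpoly k 0 1 * cc).

Lemma I_rec k : I k.+1 = - L k.
Proof.
rewrite /I /L Qrec /D -/cc.
have -> : cc * Qpoly k 0 1 + xx * yy * (Qpoly k 0 1)^`() *+ 2 =
   (xx * yy * Qpoly k 0 1)^`() *+ 2 - Qpoly k 0 1 * cc.
  rewrite !derivM !derivXsubC /cc; ring.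
rewrite int01B int01_Mn int01_deriv !hornerM !hornerXsubC subrr.
by rewrite !(mul0r, mulr0, subr0) mul0rn add0r.
Qed.

Lemma Fint n : \sum_(k < n.+1) ((1 + (-1) ^+ (n - k)) * I k - (1 - (-1) ^+ (n - k)) * L k) *+ 'C(n, k)
  = (n == 0%N)%:R *+ 2.
Proof.
have := congr1 poly_int01 (Fid n).
rewrite int01_sum int01_Mn -polyC_natr int01_C => <-.
apply: eq_bigr => k _; rewrite int01_Mn; congr (_ *+ _).
have -> : Qpoly k 0 1 * e (n - k) =
  (1 + (-1) ^+ (n - k))%:P * Qpoly k 0 1 - (1 - (-1) ^+ (n - k))%:P * (Qpoly k 0 1 * cc).
  rewrite /e polyCD polyCB polyC1 rmorphXn rmorphN rmorph1; ring.
by rewrite int01B !int01CM.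
Qed.

Definition sg (j : nat) : rat := 1 - (-1) ^+ j.

Lemma Kid n : \sum_(k < n.+1) (I k * sg (n - k)) *+ 'C(n, k) = (n == 1%N)%:R *+ 2.
Proof.
case: n => [|n]; first by rewrite big_ord1 /sg subrr mulr0 mul0rn.
rewrite (@leib _ I sg n) -(Fint n); apply: eq_bigr => k _.
rewrite I_rec /sg subSn -1?ltnS // exprS; congr (_ *+ _); ring.
Qed.

Lemma Sh N : \sum_(i < N.+1) sg i *+ 'C(N, i) = 2 ^+ N - (N == 0%N)%:R.
Proof.
have h1 := exprDn (1 : rat) 1 N.
have h2 := exprDn (1 : rat) (-1) N.
rewrite subrr expr0n in h2.
rewrite /sg; under eq_bigr do rewrite mulrnBl; rewrite sumrB h2.
congr (_ - _).
have -> : (2 : rat) = 1 + 1 by [].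
rewrite h1; apply: eq_bigr => i _; by rewrite !expr1n mulr1.
apply: eq_bigr => i _; by rewrite expr1n mul1r.
Qed.

Lemma Erec n : \sum_(k < n.+1) (I k * 2 ^+ (n - k)) *+ 'C(n.+1, k) = (n.+1)%:R.
Proof.
have := exch I sg n.+1.
under eq_bigr do rewrite Kid.
under [X in _ = X]eq_bigr do rewrite Sh.
rewrite big_ord_recl /= mulr0n mul0rn add0r big_ord_recl /= mulr1n bin1.
rewrite big1 ?addr0; last by move=> i _; rewrite !mul0rn.
rewrite big_ord_recr /= subnn /= expr0 subrr mulr0 mul0rn addr0 => h.
apply: (@mulfI _ (2 : rat)) => //.
rewrite mulr_natr h mulr_sumr; apply: eq_bigr => k _.
have hk : (k <= n)%N by rewrite -ltnS.
rewrite subSn // eqE /= subr0 exprS; ring.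
Qed.

Lemma size_bern w n : size (bernoulli_upto w n) = n.+1.
Proof. by elim: n => [//|n IH] /=; rewrite size_rcons IH. Qed.

Lemma bern_prefix w m k : (k <= m)%N -> (bernoulli_upto w m)`_k = bernoulli_poly_at k w.
Proof.
elim: m => [|m IH] hk; first by case: k hk.
case: (eqVneq k m.+1) => [->//|hne].
have hkm : (k <= m)%N by rewrite -ltnS ltn_neqAle hne hk.
by rewrite /= nth_rcons size_bern ltnS hkm IH.
Qed.

Lemma bern_rec w n : bernoulli_poly_at n w =
  w ^+ n - (n.+1)%:R^-1 * \sum_(k < n) ('C(n.+1, k))%:R * bernoulli_poly_at k w.
Proof.
case: n => [|n]; first by rewrite /bernoulli_poly_at /= big_ord0 mulr0 subr0 expr0.
rewrite {1}/bernoulli_poly_at /= nth_rcons size_bern ltnn eqxx.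
congr (_ - _ * _); apply: eq_bigr => k _; rewrite bern_prefix //.
by rewrite -ltnS.
Qed.

Theorem theorem4 (n : nat) :
  poly_int01 (Qpoly n 0 1) = 2%:R ^+ n * bernoulli_poly_at n (2%:R)^-1.
Proof.
rewrite -/(I n).
elim/ltn_ind: n => n IH.
have h := Erec n.
rewrite big_ord_recr /= subnn expr0 mulr1 binSn in h.
have hS : \sum_(i < n) I (widen_ord (leqnSn n) i) * 2 ^+ (n - widen_ord (leqnSn n) i) *+ 'C(n.+1, widen_ord (leqnSn n) i)
   = 2 ^+ n * \sum_(k < n) ('C(n.+1, k))%:R * bernoulli_poly_at k (2%:R)^-1.
  rewrite mulr_sumr; apply: eq_bigr => k _ /=.
  rewrite IH //.
  have hk : (k <= n)%N by apply: ltnW.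
  have -> : (2:rat) ^+ n = 2 ^+ (n - k) * 2 ^+ k by rewrite -exprD subnK.
  ring.
rewrite hS in h.
rewrite bern_rec exprVn.
have nz : ((n.+1)%:R : rat) != 0 by rewrite pnatr_eq0.
have tz : (2 ^+ n : rat) != 0 by rewrite expf_neq0.
have e : I n *+ n.+1 = (n.+1)%:R - 2 ^+ n * \sum_(k < n) ('C(n.+1, k))%:R * bernoulli_poly_at k (2%:R)^-1.
  by rewrite -h addrC addrK.
have -> : I n = ((n.+1)%:R - 2 ^+ n * \sum_(k < n) ('C(n.+1, k))%:R * bernoulli_poly_at k (2%:R)^-1) / (n.+1)%:R.
  by rewrite -e; field; rewrite addrC natr1 pnatr_eq0.
field; by rewrite addrC natr1 pnatr_eq0 tz.
Qed.
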